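(* For every wqo $A$ there exists $m\in\mathbb{N}$ such that $$1+\mathbf{h}(A)\;\le\;\mathbf{h}(\mathcal{P}_f(A))\;\le\;\begin{cases}2^{\mathbf{h}(A)} & \text{if } \mathbf{h}(A) \text{ is a limit ordinal},\\ 2^{\mathbf{h}(A)}\cdot m & \text{if } \mathbf{h}(A)\text{ is a successor ordinal.}\end{cases}$$
   Context: A quasi-order $(A,\le)$ is a well-quasi-order (wqo) if every infinite sequence $x_0,x_1,\dots$ in $A$ has indices $i<j$ with $x_i\le x_j$. For a wqo $A$, let $\mathrm{Bad}(A)$, $\mathrm{Dec}(A)$, $\mathrm{Inco}(A)$ be the trees of finite bad sequences (sequences with no $i<j$, $x_i\le x_j$), finite strictly decreasing sequences, and finite sequences of pairwise incomparable elements of $A$, respectively; the root is the empty sequence and the children of a sequence are its one-element extensions. These trees are well-founded; the rank of a node $s$ is $r(s)=\sup\{r(t)+1 : t \text{ a child of } s\}$. The maximal order type $\mathbf{o}(A)$, height $\mathbf{h}(A)$ and width $\mathbf{w}(A)$ are the ranks of the roots of $\mathrm{Bad}(A)$, $\mathrm{Dec}(A)$, $\mathrm{Inco}(A)$ respectively. $\mathcal{P}_f(A)$ denotes the set of finite subsets of $A$ ordered by the Hoare embedding: $S\le_H S'$ iff for every $a\in S$ there is $b\in S'$ with $a\le b$. Ordinal arithmetic (sum, product, exponentiation) is the usual one. *)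

(* Defs.v *)
(* Ordinals are represented as Brouwer trees with
   suprema indexed by arbitrary types, ordered by the standard
   (extensional) relation; arithmetic is defined by recursion on the
   right argument (successor / supremum clauses). *)
From Stdlib Require Import List.
Import ListNotations.

Inductive Ord : Type :=
| OZ : Ord
| OS : Ord -> Ord
| OL : forall (I : Type), (I -> Ord) -> Ord.

Inductive ole : Ord -> Ord -> Prop :=
| ole_Z : forall b, ole OZ b
| ole_S : forall a b, olt a b -> ole (OS a) b
| ole_L : forall I (f : I -> Ord) b, (forall i, ole (f i) b) -> ole (OL I f) b
with olt : Ord -> Ord -> Prop :=
| olt_S : forall a b, ole a b -> olt a (OS b)
| olt_L : forall a I (f : I -> Ord) i, olt a (f i) -> olt a (OL I f).

Definition oeq (a b : Ord) : Prop := ole a b /\ ole b a.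

Definition one : Ord := OS OZ.

Fixpoint onat (n : nat) : Ord :=
  match n with 0 => OZ | S n => OS (onat n) end.

Fixpoint oadd (a b : Ord) : Ord :=
  match b with
  | OZ => a
  | OS b' => OS (oadd a b')
  | OL J f => OL (option J)
                (fun o => match o with None => a | Some i => oadd a (f i) end)
  end.

Fixpoint omul (a b : Ord) : Ord :=
  match b with
  | OZ => OZ
  | OS b' => oadd (omul a b') a
  | OL J f => OL J (fun i => omul a (f i))
  end.

Fixpoint oexp2 (b : Ord) : Ord :=
  match b with
  | OZ => one
  | OS b' => omul (oexp2 b') (onat 2)
  | OL J f => OL (option J)
                (fun o => match o with None => one | Some i => oexp2 (f i) end)
  end.

Definition is_succ_ord (a : Ord) : Prop := exists b, oeq a (OS b).
Definition is_limit_ord (a : Ord) : Prop := ~ oeq a OZ /\ ~ is_succ_ord a.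

(* Existence of a rank at the
   root expresses well-foundedness of the tree below the root. *)
Inductive has_rank {T : Type} (child : T -> T -> Prop) : T -> Ord -> Prop :=
| HR : forall (s : T) (f : {t : T | child t s} -> Ord),
    (forall t, has_rank child (proj1_sig t) (f t)) ->
    has_rank child s (OL {t : T | child t s} (fun t => OS (f t))).

Definition wqo {A : Type} (le : A -> A -> Prop) : Prop :=
  forall f : nat -> A, exists i j, i < j /\ le (f i) (f j).

Definition strict {A : Type} (le : A -> A -> Prop) (x y : A) : Prop :=
  le x y /\ ~ le y x.

Fixpoint decreasing {A : Type} (le : A -> A -> Prop) (s : list A) : Prop :=
  match s with
  | [] => True
  | x :: s' => (forall y, In y s' -> strict le y x) /\ decreasing le s'
  end.

Definition dec_child {A : Type} (le : A -> A -> Prop) (t s : list A) : Prop :=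
  exists x, t = s ++ [x] /\ decreasing le t.

Definition height {A : Type} (le : A -> A -> Prop) (h : Ord) : Prop :=
  has_rank (dec_child le) [] h.

Definition Pf (A : Type) : Type :=
  { S : A -> Prop | exists l : list A, forall x, S x <-> In x l }.

Definition hoare {A : Type} (le : A -> A -> Prop) (S S' : Pf A) : Prop :=
  forall a, proj1_sig S a -> exists b, proj1_sig S' b /\ le a b.

(* Main.v *)
Require Import Defs.
From Stdlib Require Import List Arith Lia Classical ClassicalEpsilon.
Import ListNotations.

Lemma ole_inv a c : ole a c -> match a with OZ => True | OS b => olt b c | OL J f => forall i, ole (f i) c end.
Proof. destruct 1; auto. Qed.

Lemma olt_inv a c : olt a c -> match c with OZ => False | OS b => ole a b | OL J f => exists i, olt a (f i) end.
Proof. destruct 1; eauto. Qed.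

Lemma ole_OL_intro : forall y I (f : I -> Ord) i, ole y (f i) -> ole y (OL I f).
Proof.
  induction y as [|y IH|J g IH]; intros I f i H.
  - constructor.
  - apply ole_inv in H. constructor. eapply olt_L; eauto.
  - apply ole_inv in H. constructor. intros j. eapply IH; eauto.
Qed.

Lemma ole_refl : forall a, ole a a.
Proof.
  induction a as [|a IH|I f IH].
  - constructor.
  - constructor. constructor. exact IH.
  - constructor. intros i. eapply ole_OL_intro. apply IH.
Qed.

Lemma olt_aux : forall b c, olt b c -> exists c', ole b c' /\ forall x, ole x c' -> olt x c.
Proof.
  intros b c; revert b; induction c as [|c IH|J g IH]; intros b H; apply olt_inv in H.
  - destruct H.
  - exists c. split; auto. intros; constructor; auto.
  - destruct H as [j Hj]. destruct (IH j b Hj) as [c' [H1 H2]]. exists c'. split; auto.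
    intros x Hx. eapply olt_L. apply H2; auto.
Qed.

Scheme ole_mind := Induction for ole Sort Prop
with olt_mind := Induction for olt Sort Prop.

Lemma ole_trans_gen : (forall a b, ole a b -> forall c, ole b c -> ole a c) /\
                      (forall a b, olt a b -> forall c, ole b c -> olt a c).
Proof.
  split;
  [ apply (ole_mind (fun a b _ => forall c, ole b c -> ole a c) (fun a b _ => forall c, ole b c -> olt a c))
  | apply (olt_mind (fun a b _ => forall c, ole b c -> ole a c) (fun a b _ => forall c, ole b c -> olt a c))];
  try (intros; constructor; fail);
  try (intros a b _ IH c H; constructor; apply IH; auto; fail);
  try (intros I f b _ IH c H; constructor; intros i; apply IH; auto; fail);
  try (intros a b _ IH c H; apply ole_inv in H;
       destruct (olt_aux _ _ H) as [c' [H1 H2]]; apply H2; apply IH; exact H1; fail);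
  try (intros a I f i _ IH c H; apply ole_inv in H; apply IH; apply H; fail).
Qed.

Lemma ole_trans a b c : ole a b -> ole b c -> ole a c.
Proof. intros; eapply (proj1 ole_trans_gen); eauto. Qed.
Lemma olt_ole_trans a b c : olt a b -> ole b c -> olt a c.
Proof. intros; eapply (proj2 ole_trans_gen); eauto. Qed.
Lemma ole_olt_trans a b c : ole a b -> olt b c -> olt a c.
Proof. intros H1 H2. destruct (olt_aux _ _ H2) as [c' [H3 H4]]. apply H4. eapply ole_trans; eauto. Qed.

Lemma ole_OS a : ole a (OS a).
Proof.
  induction a as [|a IH|I f IH].
  - constructor.
  - constructor. constructor. exact IH.
  - constructor. intros i. eapply ole_trans. apply IH.
    constructor. constructor. eapply ole_OL_intro. apply ole_refl.
Qed.

Lemma olt_ole a b : olt a b -> ole a b.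
Proof. intros H. eapply ole_trans. apply ole_OS. constructor. exact H. Qed.

Lemma olt_trans a b c : olt a b -> olt b c -> olt a c.
Proof. intros H1 H2. eapply olt_ole_trans; eauto using olt_ole. Qed.

Lemma olt_irrefl : forall a, ~ olt a a.
Proof.
  induction a as [|a IH|I f IH]; intros H; apply olt_inv in H.
  - exact H.
  - apply ole_inv in H. exact (IH H).
  - destruct H as [i Hi]. apply (IH i). eapply ole_olt_trans; [|exact Hi].
    eapply ole_OL_intro. apply ole_refl.
Qed.

Lemma OS_mono a b : ole a b -> ole (OS a) (OS b).
Proof. intros; constructor; constructor; auto. Qed.

Lemma OS_lt a b : olt a b -> ole (OS a) b.
Proof. intros; constructor; auto. Qed.

Lemma lt_OS a b : ole a b -> olt a (OS b).
Proof. intros; constructor; auto. Qed.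

Lemma ole_OL_elim I f b : ole (OL I f) b -> forall i, ole (f i) b.
Proof. intros H; apply ole_inv in H; exact H. Qed.

Lemma olt_OL_intro a I (f : I -> Ord) i : olt a (f i) -> olt a (OL I f).
Proof. intros; eapply olt_L; eauto. Qed.

Lemma ord_total_gen : forall a b, (ole a b \/ olt b a) /\ (olt a b \/ ole b a).
Proof.
  induction a as [|a IHa|I f IHa]; intros b; split.
  - left; constructor.
  - induction b as [|b IHb|J g IHb].
    + right; constructor.
    + left. constructor. constructor.
    + destruct (classic (exists j, olt OZ (g j))) as [[j Hj]|Hn].
      * left. eapply olt_L; eauto.
      * right. constructor. intros j. destruct (IHb j); auto. exfalso; eauto.
  - destruct (IHa b) as [_ [H|H]].
    + left; constructor; auto.
    + right; constructor; auto.
  - induction b as [|b IHb|J g IHb].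
    + right; constructor.
    + destruct (IHa b) as [_ [H|H]].
      * left. constructor. constructor. auto.
      * right. constructor. constructor. auto.
    + destruct (classic (exists j, olt (OS a) (g j))) as [[j Hj]|Hn].
      * left. eapply olt_L; eauto.
      * right. constructor. intros j. destruct (IHb j); auto. exfalso; eauto.
  - destruct (classic (forall i, ole (f i) b)) as [H|H].
    + left; constructor; auto.
    + apply not_all_ex_not in H. destruct H as [i Hi].
      destruct (IHa i b) as [[H|H] _]; [contradiction|].
      right. eapply olt_L; eauto.
  - induction b as [|b IHb|J g IHb].
    + right; constructor.
    + destruct (classic (forall i, ole (f i) b)) as [H|H].
      * left. constructor. constructor. auto.
      * apply not_all_ex_not in H. destruct H as [i Hi].
        destruct (IHa i b) as [[H|H] _]; [contradiction|].
        right. constructor. eapply olt_L; eauto.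
    + destruct (classic (exists j, olt (OL I f) (g j))) as [[j Hj]|Hn].
      * left. eapply olt_L; eauto.
      * right. constructor. intros j. destruct (IHb j); auto. exfalso; eauto.
Qed.

Lemma not_ole_lt a b : ~ ole a b -> olt b a.
Proof. intros H. destruct (proj1 (ord_total_gen a b)); tauto. Qed.
Lemma not_lt_ole a b : ~ olt a b -> ole b a.
Proof. intros H. destruct (proj2 (ord_total_gen a b)); tauto. Qed.

Lemma ole_lt_False a b : ole a b -> olt b a -> False.
Proof. intros H1 H2. apply (olt_irrefl a). eapply ole_olt_trans; eauto. Qed.

Lemma olt_acc : forall g a, ole a g -> Acc olt a.
Proof.
  induction g as [|g IH|I f IH]; intros a Ha; constructor; intros b Hb.
  - pose proof (olt_ole_trans _ _ _ Hb Ha) as H. apply olt_inv in H. destruct H.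
  - pose proof (olt_ole_trans _ _ _ Hb Ha) as H. apply olt_inv in H. apply IH; auto.
  - pose proof (olt_ole_trans _ _ _ Hb Ha) as H. apply olt_inv in H. destruct H as [i Hi].
    apply (IH i). apply olt_ole; auto.
Qed.

Lemma olt_wf : well_founded olt.
Proof. intros a. apply (olt_acc a). apply ole_refl. Qed.

Lemma oadd_le_l a b : ole a (oadd a b).
Proof.
  induction b as [|b IH|J g IH]; simpl.
  - apply ole_refl.
  - eapply ole_trans; [exact IH| apply ole_OS].
  - apply (ole_OL_intro _ _ _ None). apply ole_refl.
Qed.

Lemma oadd_mono_r_gen x : (forall a b, ole a b -> ole (oadd x a) (oadd x b)) /\
                          (forall a b, olt a b -> olt (oadd x a) (oadd x b)).
Proof.
  split;
  [ apply (ole_mind (fun a b _ => ole (oadd x a) (oadd x b)) (fun a b _ => olt (oadd x a) (oadd x b)))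
  | apply (olt_mind (fun a b _ => ole (oadd x a) (oadd x b)) (fun a b _ => olt (oadd x a) (oadd x b)))];
  simpl.
  all: try (intros; apply oadd_le_l; fail).
  all: try (intros a b _ IH; constructor; exact IH; fail).
  all: try (intros I f b _ IH; constructor; intros [i|]; [apply IH| apply oadd_le_l]; fail).
  all: try (intros a b _ IH; constructor; exact IH; fail).
  all: try (intros a I f i _ IH; apply (olt_L _ _ _ (Some i)); exact IH; fail).
Qed.

Lemma oadd_mono_r x a b : ole a b -> ole (oadd x a) (oadd x b).
Proof. apply oadd_mono_r_gen. Qed.
Lemma oadd_smono_r x a b : olt a b -> olt (oadd x a) (oadd x b).
Proof. apply oadd_mono_r_gen. Qed.

Lemma oadd_mono_l a a' b : ole a a' -> ole (oadd a b) (oadd a' b).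
Proof.
  intros H. induction b as [|b IH|J g IH]; simpl.
  - exact H.
  - apply OS_mono; auto.
  - constructor. intros [j|].
    + apply (ole_OL_intro _ _ _ (Some j)). apply IH.
    + apply (ole_OL_intro _ _ _ None). exact H.
Qed.

Lemma oadd_mono a a' b b' : ole a a' -> ole b b' -> ole (oadd a b) (oadd a' b').
Proof. intros; eapply ole_trans; [apply oadd_mono_l; eauto| apply oadd_mono_r; auto]. Qed.

Lemma oadd_assoc_le u v w : ole (oadd u (oadd v w)) (oadd (oadd u v) w).
Proof.
  induction w as [|w IH|J g IH]; simpl.
  - apply ole_refl.
  - apply OS_mono; auto.
  - constructor. intros [[j|]|].
    + apply (ole_OL_intro _ _ _ (Some j)). apply IH.
    + apply (ole_OL_intro _ _ _ None). apply ole_refl.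
    + apply (ole_OL_intro _ _ _ None). apply oadd_le_l.
Qed.

Lemma oadd_OZ_l x : ole x (oadd OZ x).
Proof.
  induction x as [|x IH|J g IH]; simpl.
  - apply ole_refl.
  - apply OS_mono; auto.
  - constructor. intros j. apply (ole_OL_intro _ _ _ (Some j)). apply IH.
Qed.

Lemma oadd_le_r z y : ole y (oadd z y).
Proof. eapply ole_trans. apply oadd_OZ_l. apply oadd_mono_l. constructor. Qed.

Lemma omul_mono_nat x n m : n <= m -> ole (omul x (onat n)) (omul x (onat m)).
Proof.
  induction 1.
  - apply ole_refl.
  - eapply ole_trans; [exact IHle|]. simpl. apply oadd_le_l.
Qed.

Lemma omul_mono_l_nat x y n : ole x y -> ole (omul x (onat n)) (omul y (onat n)).
Proof.
  intros H; induction n; simpl.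
  - constructor.
  - apply oadd_mono; auto.
Qed.

Lemma omul_add_nat x p q : ole (oadd (omul x (onat p)) (omul x (onat q))) (omul x (onat (p+q))).
Proof.
  induction q.
  - rewrite Nat.add_0_r. apply ole_refl.
  - rewrite Nat.add_succ_r. simpl.
    eapply ole_trans. apply oadd_assoc_le. apply oadd_mono_l. exact IHq.
Qed.

Lemma omul_assoc_nat x a b : ole (omul (omul x (onat a)) (onat b)) (omul x (onat (a*b))).
Proof.
  induction b.
  - rewrite Nat.mul_0_r. constructor.
  - rewrite Nat.mul_succ_r. simpl.
    eapply ole_trans; [apply oadd_mono_l; exact IHb|]. apply omul_add_nat.
Qed.

Lemma omul_one x : ole x (omul x (onat 1)).
Proof. simpl. apply oadd_OZ_l. Qed.

Lemma omul_two x : ole x (omul x (onat 2)).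
Proof. simpl. eapply ole_trans. apply oadd_OZ_l. apply oadd_le_l. Qed.

Lemma one_le_exp b : ole one (oexp2 b).
Proof.
  induction b as [|b IH|J g IH]; simpl.
  - apply ole_refl.
  - eapply ole_trans; [exact IH|]. apply oadd_le_r.
  - apply (ole_OL_intro _ _ _ None). apply ole_refl.
Qed.

Lemma oexp2_mono_gen : (forall a b, ole a b -> ole (oexp2 a) (oexp2 b)) /\
                       (forall a b, olt a b -> ole (oexp2 (OS a)) (oexp2 b)).
Proof.
  split;
  [ apply (ole_mind (fun a b _ => ole (oexp2 a) (oexp2 b)) (fun a b _ => ole (oexp2 (OS a)) (oexp2 b)))
  | apply (olt_mind (fun a b _ => ole (oexp2 a) (oexp2 b)) (fun a b _ => ole (oexp2 (OS a)) (oexp2 b)))].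
  all: try (intros; apply one_le_exp; fail).
  all: try (intros a b _ IH; exact IH; fail).
  all: try (intros I f b _ IH; simpl; constructor; intros [i|]; [apply IH| apply one_le_exp]; fail).
  all: try (intros a b _ IH; change (ole (omul (oexp2 a) (onat 2)) (omul (oexp2 b) (onat 2)));
            apply omul_mono_l_nat; exact IH; fail).
  all: try (intros a I f i _ IH; eapply ole_trans; [exact IH|]; simpl;
            apply (ole_OL_intro _ _ _ (Some i)); apply ole_refl; fail).
Qed.

Lemma oexp2_mono a b : ole a b -> ole (oexp2 a) (oexp2 b).
Proof. apply oexp2_mono_gen. Qed.

Lemma exp_mul_le a n : ole (omul (oexp2 a) (onat n)) (oexp2 (oadd a (onat n))).
Proof.
  induction n; simpl.
  - constructor.
  - change (ole (oadd (omul (oexp2 a) (onat n)) (oexp2 a))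
                (omul (oexp2 (oadd a (onat n))) (onat 2))).
    simpl. apply oadd_mono.
    + eapply ole_trans; [exact IHn|]. apply oadd_OZ_l.
    + apply oexp2_mono. apply oadd_le_l.
Qed.

Lemma has_rank_inv {T} (child : T -> T -> Prop) s r : has_rank child s r ->
  exists f : {t : T | child t s} -> Ord, r = OL _ (fun t => OS (f t)) /\
    forall t, has_rank child (proj1_sig t) (f t).
Proof. destruct 1; eauto. Qed.

Lemma rank_child_lt {T} (child : T -> T -> Prop) s r t : has_rank child s r -> child t s ->
  exists r', has_rank child t r' /\ olt r' r.
Proof.
  intros H Ht. destruct (has_rank_inv _ _ _ H) as [f [-> Hf]].
  exists (f (exist _ t Ht)). split. apply (Hf (exist _ t Ht)).
  apply (olt_L _ _ _ (exist _ t Ht)). constructor. apply ole_refl.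
Qed.

Lemma rank_lt_inv {T} (child : T -> T -> Prop) s r o : has_rank child s r -> olt o r ->
  exists t r', child t s /\ has_rank child t r' /\ ole o r'.
Proof.
  intros H Ho. destruct (has_rank_inv _ _ _ H) as [f [-> Hf]].
  apply olt_inv in Ho. destruct Ho as [[t Ht] Hi]. apply olt_inv in Hi.
  exists t, (f (exist _ t Ht)). split; auto. split; auto. apply (Hf (exist _ t Ht)).
Qed.

Lemma rank_measure {T} (child : T -> T -> Prop) (P : T -> Prop) (g : T -> Ord) :
  (forall s t, P s -> child t s -> P t /\ olt (g t) (g s)) ->
  forall s r, has_rank child s r -> P s -> ole r (g s).
Proof.
  intros Hg s r H. induction H as [s f Hf IH]. intros Ps.
  constructor. intros [t Ht]. constructor.
  destruct (Hg s t Ps Ht) as [Pt Hlt].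
  eapply ole_olt_trans; [apply (IH (exist _ t Ht)); exact Pt| exact Hlt].
Qed.

Lemma rank_unique_le {T} (child : T -> T -> Prop) s r1 r2 :
  has_rank child s r1 -> has_rank child s r2 -> ole r1 r2.
Proof.
  intros H. revert r2. induction H as [s f Hf IH]. intros r2 H2.
  destruct (has_rank_inv _ _ _ H2) as [f2 [-> Hf2]].
  constructor. intros t. apply (ole_OL_intro _ _ _ t). apply OS_mono. apply IH. apply Hf2.
Qed.

Lemma rank_exists {T} (child : T -> T -> Prop) s : Acc (fun t s => child t s) s ->
  exists r, has_rank child s r.
Proof.
  induction 1 as [s _ IH].
  set (f := fun t : {t : T | child t s} =>
        proj1_sig (constructive_indefinite_description _ (IH (proj1_sig t) (proj2_sig t)))).
  exists (OL _ (fun t => OS (f t))). constructor. intros t.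
  unfold f. apply proj2_sig.
Qed.

Lemma wf_no_descent {X} (R : X -> X -> Prop) :
  (forall f : nat -> X, ~ (forall n, R (f (S n)) (f n))) -> forall x, Acc R x.
Proof.
  intros H x. apply NNPP; intros Hx.
  assert (Hstep : forall y, ~ Acc R y -> exists z, R z y /\ ~ Acc R z).
  { intros y Hy. apply NNPP; intros Hn. apply Hy. constructor. intros z Hz.
    apply NNPP; intros Hz'. apply Hn; eauto. }
  set (step := fun y => match excluded_middle_informative (exists z, R z y /\ ~ Acc R z) with
                        | left E => proj1_sig (constructive_indefinite_description _ E)
                        | right _ => y end).
  assert (Hs : forall y, ~ Acc R y -> R (step y) y /\ ~ Acc R (step y)).
  { intros y Hy. unfold step. destruct (excluded_middle_informative _) as [E|E].
    - apply (proj2_sig (constructive_indefinite_description _ E)).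
    - exfalso; apply E; auto. }
  set (f := fun n => Nat.iter n step x).
  assert (Hf : forall n, ~ Acc R (f n)).
  { induction n; simpl; auto. apply (Hs _ IHn). }
  apply (H f). intros n. apply (Hs _ (Hf n)).
Qed.

Lemma decreasing_app {X} (le : X -> X -> Prop) l y :
  decreasing le (l ++ [y]) -> decreasing le l /\ forall x, In x l -> strict le y x.
Proof.
  induction l as [|a l IH]; simpl.
  - intros _; split; auto. intros x [].
  - intros [H1 H2]. destruct (IH H2) as [H3 H4]. split.
    + split; auto. intros z Hz. apply H1. apply in_or_app; auto.
    + intros x [<-|Hx]; auto. apply H1. apply in_or_app; right; simpl; auto.
Qed.

Lemma decreasing_app_intro {X} (le : X -> X -> Prop) l y :
  decreasing le l -> (forall x, In x l -> strict le y x) -> decreasing le (l ++ [y]).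
Proof.
  induction l as [|a l IH]; simpl.
  - intros _ _. split; auto. intros z [].
  - intros [H1 H2] H3. split.
    + intros z Hz. apply in_app_or in Hz. destruct Hz as [Hz|[<-|[]]]; auto.
    + apply IH; auto.
Qed.

Lemma strict_trans {X} (le : X -> X -> Prop) (tr : forall x y z, le x y -> le y z -> le x z) x y z :
  strict le x y -> strict le y z -> strict le x z.
Proof.
  intros [H1 H2] [H3 H4]. split; eauto.
Qed.

Lemma dec_acc {X} (le : X -> X -> Prop) (wf : forall x, Acc (strict le) x) :
  Acc (dec_child le) [].
Proof.
  assert (H : forall x, Acc (strict le) x -> forall s0, Acc (dec_child le) (s0 ++ [x])).
  { induction 1 as [x _ IH]. intros s0. constructor. intros t [y [-> Hd]].
    apply decreasing_app in Hd. destruct Hd as [_ Hd].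
    apply IH. apply Hd. apply in_or_app; right; simpl; auto. }
  constructor. intros t [y [-> _]]. apply (H y (wf y) []).
Qed.

Lemma dec_rank_le {X} (le : X -> X -> Prop) (rk : X -> Ord) (d : X)
  (Hrk : forall x y, strict le y x -> olt (rk y) (rk x)) :
  forall s r, has_rank (dec_child le) s r -> (exists s0 x, s = s0 ++ [x]) -> ole r (rk (last s d)).
Proof.
  apply (rank_measure _ (fun s => exists s0 x, s = s0 ++ [x]) (fun s => rk (last s d))).
  intros s t [s0 [x ->]] [y [-> Hd]]. split; eauto.
  rewrite !last_last. apply Hrk. apply decreasing_app in Hd. apply (proj2 Hd).
  apply in_or_app; right; simpl; auto.
Qed.

Lemma rk_le_dec {X} (le : X -> X -> Prop) (tr : forall x y z, le x y -> le y z -> le x z) :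
  forall x rho, has_rank (fun y x => strict le y x) x rho ->
  forall s0 r, decreasing le (s0 ++ [x]) -> has_rank (dec_child le) (s0 ++ [x]) r -> ole rho r.
Proof.
  intros x rho H. induction H as [x f Hf IH]. intros s0 r Hd Hr.
  constructor. intros [y Hy]. constructor.
  assert (Hd' : decreasing le ((s0 ++ [x]) ++ [y])).
  { apply decreasing_app_intro; auto. intros z Hz. apply in_app_or in Hz.
    destruct Hz as [Hz|[<-|[]]]; auto. eapply strict_trans; eauto.
    apply decreasing_app in Hd. apply (proj2 Hd); auto. }
  destruct (rank_child_lt _ _ _ ((s0 ++ [x]) ++ [y]) Hr) as [r' [Hr' Hlt]].
  { exists y; split; auto. }
  eapply ole_olt_trans; [|exact Hlt]. apply (IH (exist _ y Hy) (s0 ++ [x])); auto.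
Qed.

Section Main.
Variable A : Type.
Variable le : A -> A -> Prop.
Hypothesis le_refl : forall x, le x x.
Hypothesis le_trans : forall x y z, le x y -> le y z -> le x z.
Hypothesis Hwqo : wqo le.

Definition lt := strict le.

Lemma lt_acc : forall x, Acc lt x.
Proof.
  apply wf_no_descent. intros f Hf.
  destruct (Hwqo f) as [i [j [Hij Hle]]].
  assert (Hc : forall k, S i <= k -> le (f k) (f (S i))).
  { induction 1; auto. eapply le_trans; [apply (Hf m)|auto]. }
  destruct (Hf i) as [_ H2]. apply H2. eapply le_trans; [exact Hle|]. apply Hc; lia.
Qed.

Definition rk (x : A) : Ord :=
  proj1_sig (constructive_indefinite_description _ (rank_exists (fun y x => strict le y x) x (lt_acc x))).

Lemma rk_spec x : has_rank (fun y x => strict le y x) x (rk x).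
Proof. unfold rk. apply proj2_sig. Qed.

Lemma rk_lt x y : lt y x -> olt (rk y) (rk x).
Proof.
  intros H. destruct (rank_child_lt _ _ _ y (rk_spec x) H) as [r' [Hr Hlt]].
  eapply ole_olt_trans; [|exact Hlt]. eapply rank_unique_le; [apply rk_spec| exact Hr].
Qed.

Lemma rk_mono x y : le y x -> ole (rk y) (rk x).
Proof.
  intros H. destruct (has_rank_inv _ _ _ (rk_spec y)) as [f [Hy Hf]]. rewrite Hy.
  constructor. intros [z Hz]. constructor. simpl.
  eapply ole_olt_trans; [eapply rank_unique_le; [apply (Hf (exist _ z Hz))| apply rk_spec]|].
  apply rk_lt. destruct Hz as [H1 H2]. split; eauto.
Qed.

Definition PS := Pf A.
Definition mem (S : PS) (a : A) : Prop := proj1_sig S a.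
Definition hle := hoare le.

Lemma hle_refl S : hle S S.
Proof. intros a Ha; eauto. Qed.
Lemma hle_trans S1 S2 S3 : hle S1 S2 -> hle S2 S3 -> hle S1 S3.
Proof.
  intros H1 H2 a Ha. destruct (H1 a Ha) as [b [Hb Hab]]. destruct (H2 b Hb) as [c [Hc Hbc]].
  eauto.
Qed.

Lemma hlt_acc : forall S, Acc (strict hle) S.
Proof.
  apply wf_no_descent. intros f Hf.
  assert (Hx : forall n, exists a, mem (f n) a /\ forall b, mem (f (S n)) b -> ~ le a b).
  { intros n. destruct (Hf n) as [_ H2]. apply NNPP; intros Hn. apply H2.
    intros a Ha. apply NNPP; intros Hb. apply Hn. exists a. split; auto.
    intros b Hb' Hab. apply Hb. exists b; auto. }
  set (x := fun n => proj1_sig (constructive_indefinite_description _ (Hx n))).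
  assert (Hxs : forall n, mem (f n) (x n) /\ forall b, mem (f (S n)) b -> ~ le (x n) b).
  { intros n. unfold x. apply proj2_sig. }
  destruct (Hwqo x) as [i [j [Hij Hle]]].
  assert (Hc : forall k, S i <= k -> hle (f k) (f (S i))).
  { induction 1. apply hle_refl. eapply hle_trans; [apply (Hf m)|auto]. }
  destruct (Hc j ltac:(lia) (x j) (proj1 (Hxs j))) as [b [Hb Hjb]].
  apply ((proj2 (Hxs i)) b Hb). eauto.
Qed.

Definition H (S : PS) : Ord :=
  proj1_sig (constructive_indefinite_description _ (rank_exists (fun T S => strict hle T S) S (hlt_acc S))).

Lemma H_spec S : has_rank (fun T S => strict hle T S) S (H S).
Proof. unfold H. apply proj2_sig. Qed.

Lemma H_lt S T : strict hle T S -> olt (H T) (H S).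
Proof.
  intros Hs. destruct (rank_child_lt _ _ _ T (H_spec S) Hs) as [r' [Hr Hlt]].
  eapply ole_olt_trans; [|exact Hlt]. eapply rank_unique_le; [apply H_spec| exact Hr].
Qed.

Lemma filt_ex (P : A -> Prop) (S : PS) :
  exists l, forall x, (mem S x /\ P x) <-> In x l.
Proof.
  destruct (proj2_sig S) as [l Hl].
  exists (filter (fun x => if excluded_middle_informative (P x) then true else false) l).
  intros x. rewrite filter_In. unfold mem. rewrite Hl.
  destruct (excluded_middle_informative (P x)); intuition congruence.
Qed.

Definition filt (P : A -> Prop) (S : PS) : PS := exist _ (fun x => mem S x /\ P x) (filt_ex P S).

Lemma mem_filt P S x : mem (filt P S) x <-> mem S x /\ P x.
Proof. reflexivity. Qed.

Definition below (g : Ord) (S : PS) : Prop := forall a, mem S a -> olt (rk a) g.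

Lemma below_hle g S T : hle T S -> below g S -> below g T.
Proof.
  intros HTS HS a Ha. destruct (HTS a Ha) as [b [Hb Hab]].
  eapply ole_olt_trans; [apply rk_mono; exact Hab| apply HS; exact Hb].
Qed.

Definition Cl (g : Ord) : Prop :=
  exists m, forall S, below g S -> olt (H S) (omul (oexp2 g) (onat m)).

Lemma H_empty S : (forall a, ~ mem S a) -> ole (H S) OZ.
Proof.
  intros HS. destruct (has_rank_inv _ _ _ (H_spec S)) as [f [E _]]. rewrite E.
  constructor. intros [T [H1 HT]]. exfalso. apply HT. intros a Ha. exfalso; eapply HS; eauto.
Qed.

Lemma list_max (g : A -> Ord) (l : list A) : l <> [] ->
  exists a0, In a0 l /\ forall a, In a l -> ole (g a) (g a0).
Proof.
  induction l as [|a l IH]; intros Hne; [congruence|].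
  destruct l as [|b l'].
  - exists a. split; simpl; auto. intros x [<-|[]]. apply ole_refl.
  - destruct IH as [a0 [H1 H2]]; [congruence|].
    destruct (classic (ole (g a) (g a0))) as [Hc|Hc].
    + exists a0. split; [right; auto|]. intros x [<-|Hx]; auto.
    + apply not_ole_lt in Hc. exists a. split; [left; auto|]. intros x [<-|Hx].
      apply ole_refl. eapply ole_trans; [apply H2; auto| apply olt_ole; auto].
Qed.

Lemma set_max (S : PS) : (exists a, mem S a) ->
  exists a0, mem S a0 /\ forall a, mem S a -> ole (rk a) (rk a0).
Proof.
  intros [a Ha]. destruct (proj2_sig S) as [l Hl].
  destruct (list_max rk l) as [a0 [H1 H2]].
  { intros E. apply (proj1 (Hl a)) in Ha. rewrite E in Ha. destruct Ha. }
  exists a0. split. apply Hl; auto. intros x Hx. apply H2. apply Hl; auto.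
Qed.

Lemma succ_step y g : ole (OS y) g -> ~ is_succ_ord g -> olt (OS y) g.
Proof.
  intros H1 H2. apply NNPP; intros H3. apply not_lt_ole in H3. apply H2. exists y. split; auto.
Qed.

Lemma L_lemma g : ~ is_succ_ord g -> (forall d, olt d g -> Cl d) ->
  forall S, below g S -> olt (H S) (oexp2 g).
Proof.
  intros Hns HC S HS.
  destruct (classic (exists a, mem S a)) as [Hne|He].
  - destruct (set_max S Hne) as [a0 [Ha0 Hmax]].
    set (mu := rk a0).
    assert (Hk : forall k, olt (oadd (OS mu) (onat k)) g).
    { induction k; simpl.
      - apply succ_step; auto. constructor. apply HS; auto.
      - apply succ_step; auto. constructor. exact IHk. }
    destruct (HC (OS mu) (Hk 0)) as [m Hm].
    eapply olt_ole_trans. apply Hm.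
    { intros a Ha. constructor. apply Hmax; auto. }
    eapply ole_trans. apply exp_mul_le. apply oexp2_mono. apply olt_ole. apply Hk.
  - eapply ole_olt_trans. apply H_empty. intros a Ha; apply He; eauto.
    eapply olt_ole_trans; [|apply one_le_exp]. constructor. constructor.
Qed.

Fixpoint cnt (P : A -> Prop) (l : list A) : nat :=
  match l with
  | [] => 0
  | r :: l' => if excluded_middle_informative (P r) then S (cnt P l') else cnt P l'
  end.

Lemma cnt_le P P' l : (forall r, In r l -> P r -> P' r) -> cnt P l <= cnt P' l.
Proof.
  induction l as [|r l IH]; simpl; intros Hs; auto.
  assert (IH' := IH (fun x Hx => Hs x (or_intror Hx))).
  destruct (excluded_middle_informative (P r)); destruct (excluded_middle_informative (P' r)); try lia.
  exfalso; eauto.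
Qed.

Lemma cnt_eq P P' l : (forall r, In r l -> P r -> P' r) -> cnt P l = cnt P' l ->
  forall r, In r l -> P' r -> P r.
Proof.
  induction l as [|r l IH]; simpl; intros Hs He x Hx HP'; [destruct Hx|].
  assert (Hs' : forall x, In x l -> P x -> P' x) by eauto.
  pose proof (cnt_le _ _ _ Hs') as Hle.
  destruct (excluded_middle_informative (P r)); destruct (excluded_middle_informative (P' r)).
  - destruct Hx as [<-|Hx]; auto; eapply IH; eauto.
  - exfalso; eauto.
  - lia.
  - destruct Hx as [<-|Hx]; [contradiction|]; eapply IH; eauto.
Qed.

Lemma cnt_len P l : cnt P l <= length l.
Proof.
  induction l as [|r l IH]; simpl; auto. destruct (excluded_middle_informative (P r)); lia.
Qed.

Fixpoint preseq (next : list A -> A) (n : nat) : list A :=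
  match n with 0 => [] | S n => next (preseq next n) :: preseq next n end.

Lemma top_reps g beta : oeq g (OS beta) ->
  exists L, (forall r, In r L -> olt (rk r) g /\ ~ olt (rk r) beta) /\
    forall a, olt (rk a) g -> ~ olt (rk a) beta -> exists r, In r L /\ le a r /\ le r a.
Proof.
  intros [Hg1 Hg2].
  set (Top := fun a => olt (rk a) g /\ ~ olt (rk a) beta).
  apply NNPP; intros Hno.
  assert (Hn : forall L, (forall r, In r L -> Top r) ->
            exists a, Top a /\ forall r, In r L -> ~ (le a r /\ le r a)).
  { intros L HL. apply NNPP; intros Hc. apply Hno. exists L. split; auto.
    intros a Ha1 Ha2. apply NNPP; intros Hd. apply Hc. exists a. split; [split; auto|].
    intros r Hr He. apply Hd. exists r. destruct He; auto. }
  destruct (Hn [] (fun r Hr => match Hr with end)) as [ad _].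
  set (next := fun L => match excluded_middle_informative
            (exists a, Top a /\ forall r, In r L -> ~ (le a r /\ le r a)) with
          | left E => proj1_sig (constructive_indefinite_description _ E) | right _ => ad end).
  assert (Hnext : forall L, (forall r, In r L -> Top r) ->
            Top (next L) /\ forall r, In r L -> ~ (le (next L) r /\ le r (next L))).
  { intros L HL. unfold next. destruct (excluded_middle_informative _) as [E|E].
    - apply (proj2_sig (constructive_indefinite_description _ E)).
    - exfalso. apply E. apply Hn; auto. }
  assert (Hpre : forall n r, In r (preseq next n) -> Top r).
  { induction n; simpl; intros r Hr; [destruct Hr|]. destruct Hr as [<-|Hr]; auto.
    apply Hnext. auto. }
  set (u := fun n => next (preseq next n)).
  assert (Hin : forall i j, i < j -> In (u i) (preseq next j)).
  { intros i j; induction j; intros Hij; [lia|]. simpl.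
    destruct (Nat.eq_dec i j) as [->|Hne]; [left; reflexivity| right; apply IHj; lia]. }
  destruct (Hwqo u) as [i [j [Hij Hle]]].
  destruct (Hnext (preseq next j) (Hpre j)) as [[Huj1 Huj2] Hd].
  assert (Hui : Top (u i)) by (apply (Hpre j); apply Hin; auto).
  destruct Hui as [Hui1 Hui2].
  assert (Hlt : lt (u i) (u j)).
  { split; auto. intros Hji. apply (Hd (u i) (Hin i j Hij)). split; auto. }
  apply rk_lt in Hlt.
  assert (E1 : ole beta (rk (u i))) by (apply not_lt_ole; auto).
  assert (E2 : ole (rk (u j)) beta).
  { pose proof (olt_ole_trans _ _ _ Huj1 Hg1) as X. apply olt_inv in X. exact X. }
  apply (olt_irrefl beta). eapply ole_olt_trans; [exact E1|]. eapply olt_ole_trans; eauto.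
Qed.

Lemma C_succ g beta : oeq g (OS beta) -> Cl beta -> Cl g.
Proof.
  intros Hg [m0 Hm0].
  destruct (top_reps g beta Hg) as [L [HL1 HL2]].
  destruct Hg as [Hg1 Hg2].
  assert (Hbl : forall a, olt (rk a) g -> ole (rk a) beta).
  { intros a Ha. pose proof (olt_ole_trans _ _ _ Ha Hg1) as X. apply olt_inv in X. exact X. }
  set (Q := fun S r => exists s, mem S s /\ le r s).
  set (c := fun S => cnt (Q S) L).
  set (F := fun S => filt (fun x => olt (rk x) beta /\
                 ~ exists t, mem S t /\ ~ olt (rk t) beta /\ le x t) S).
  set (K := omul (oexp2 beta) (onat m0)).
  set (gm := fun S => oadd (omul K (onat (c S))) (H (F S))).
  assert (HF : forall S, olt (H (F S)) K).
  { intros S. apply Hm0. intros a Ha. apply Ha. }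
  assert (HQ : forall S T, hle T S -> forall r, In r L -> Q T r -> Q S r).
  { intros S T HTS r _ [s [Hs Hrs]]. destruct (HTS s Hs) as [b [Hb Hsb]]. exists b; eauto. }
  assert (Htc : forall S T, below g S -> hle T S -> c T = c S ->
            forall t, mem S t -> ~ olt (rk t) beta ->
            exists s', mem T s' /\ le t s' /\ ~ olt (rk s') beta).
  { intros S T HS HTS Hc t Ht Htb.
    destruct (HL2 t (HS t Ht) Htb) as [r [Hr [Htr Hrt]]].
    destruct (cnt_eq _ _ _ (HQ S T HTS) Hc r Hr) as [s' [Hs' Hrs']].
    { exists t; auto. }
    exists s'. split; auto. split; eauto. intros Hs'b. apply (proj2 (HL1 r Hr)).
    eapply ole_olt_trans; [apply rk_mono; exact Hrs'| exact Hs'b]. }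
  assert (Hmeas : forall S T, below g S -> strict hle T S -> below g T /\ olt (gm T) (gm S)).
  { intros S T HS [HTS HST]. split; [eapply below_hle; eauto|].
    assert (Hcle : c T <= c S) by (apply cnt_le; apply HQ; auto).
    destruct (Nat.eq_dec (c T) (c S)) as [Heq|Hne].
    - unfold gm. rewrite Heq. apply oadd_smono_r. apply H_lt. split.
      + intros x Hx. destruct Hx as [HxT [Hxb Hxn]]. destruct (HTS x HxT) as [b [Hb Hxb']].
        destruct (classic (olt (rk b) beta)) as [Hbb|Hbb].
        * destruct (classic (exists t, mem S t /\ ~ olt (rk t) beta /\ le b t)) as [[t [Ht [Htb Hbt]]]|Hnt].
          -- exfalso. destruct (Htc S T HS HTS Heq t Ht Htb) as [s' [Hs' [Hts' Hs'b]]].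
             apply Hxn. exists s'. split; auto. split; auto. eauto.
          -- exists b. split; [|exact Hxb']. split; [exact Hb|]. split; [exact Hbb|].
             intros [t [Ht [Htb Hbt]]]. apply Hnt. exists t. auto.
        * exfalso. destruct (Htc S T HS HTS Heq b Hb Hbb) as [s' [Hs' [Hbs' Hs'b]]].
          apply Hxn. exists s'. split; auto. split; auto. eauto.
      + intros Hc. apply HST. intros s Hs.
        destruct (classic (olt (rk s) beta)) as [Hsb|Hsb].
        * destruct (classic (exists t, mem S t /\ ~ olt (rk t) beta /\ le s t)) as [[t [Ht [Htb Hst]]]|Hnt].
          -- destruct (Htc S T HS HTS Heq t Ht Htb) as [s' [Hs' [Hts' _]]]. exists s'; eauto.
          -- destruct (Hc s) as [x [Hx Hsx]].
             { split; [exact Hs|]. split; [exact Hsb|]. exact Hnt. }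
             exists x. split; [apply Hx| exact Hsx].
        * destruct (Htc S T HS HTS Heq s Hs Hsb) as [s' [Hs' [Hss' _]]]. exists s'; eauto.
    - unfold gm. eapply olt_ole_trans.
      + apply oadd_smono_r. apply HF.
      + change (ole (omul K (onat (Datatypes.S (c T)))) (oadd (omul K (onat (c S))) (H (F S)))).
        eapply ole_trans; [apply (omul_mono_nat _ _ (c S)); lia|]. apply oadd_le_l. }
  exists (m0 * S (length L)). intros S HS.
  pose proof (rank_measure _ (below g) gm Hmeas S (H S) (H_spec S) HS) as Hb.
  eapply ole_olt_trans; [exact Hb|]. unfold gm.
  eapply olt_ole_trans; [apply oadd_smono_r; apply HF|].
  change (ole (omul K (onat (Datatypes.S (c S)))) (omul (oexp2 g) (onat (m0 * Datatypes.S (length L))))).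
  eapply ole_trans; [apply (omul_mono_nat _ _ (Datatypes.S (length L))); pose proof (cnt_len (Q S) L); unfold c; lia|].
  eapply ole_trans; [apply omul_assoc_nat|].
  apply omul_mono_l_nat. apply oexp2_mono. eapply ole_trans; [apply ole_OS| exact Hg2].
Qed.

Lemma C_all : forall g, Cl g.
Proof.
  intros g. induction g as [g IH] using (well_founded_ind olt_wf).
  destruct (classic (is_succ_ord g)) as [[beta Hb]|Hns].
  - apply (C_succ g beta Hb). apply IH. eapply olt_ole_trans; [apply lt_OS, ole_refl| apply (proj2 Hb)].
  - exists 1. intros S HS. eapply olt_ole_trans; [apply L_lemma; eauto| apply omul_one].
Qed.

Lemma sing_ex (x : A) : exists l, forall y, y = x <-> In y l.
Proof. exists [x]. intros y; simpl; intuition. Qed.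
Definition sing (x : A) : PS := exist _ (fun y => y = x) (sing_ex x).
Lemma emp_ex : exists l : list A, forall y : A, False <-> In y l.
Proof. exists []. intros y; simpl; intuition. Qed.
Definition emp : PS := exist _ (fun _ => False) emp_ex.

Lemma sing_strict x y : lt y x -> strict hle (sing y) (sing x).
Proof.
  intros [H1 H2]. split.
  - intros a Ha. exists x. split. reflexivity. simpl in Ha. subst; auto.
  - intros Hc. destruct (Hc x eq_refl) as [b [Hb Hxb]]. simpl in Hb. subst; auto.
Qed.

Lemma dec_map s : decreasing le s -> decreasing hle (map sing s).
Proof.
  induction s as [|x s IH]; simpl; auto. intros [H1 H2]. split; auto.
  intros Y HY. apply in_map_iff in HY. destruct HY as [y [<- Hy]]. apply sing_strict. apply H1; auto.
Qed.

Lemma lower_bound : forall s r1, has_rank (dec_child le) s r1 -> decreasing le s ->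
  forall r2, has_rank (dec_child hle) (map sing s) r2 -> ole (oadd one r1) r2.
Proof.
  intros s r1 Hr. induction Hr as [s f Hf IH]. intros Hd r2 Hr2. simpl.
  constructor. intros [[t Ht]|].
  - simpl. constructor.
    destruct (rank_child_lt _ _ _ (map sing t) Hr2) as [r' [Hr' Hlt]].
    { destruct Ht as [y [-> Hdt]]. exists (sing y). rewrite map_app. split; auto.
      rewrite <- map_app. apply dec_map; auto. }
    eapply ole_olt_trans; [|exact Hlt]. apply (IH (exist _ t Ht)); auto.
    destruct Ht as [y [-> Hdt]]; auto.
  - constructor.
    destruct (rank_child_lt _ _ _ (map sing s ++ [emp]) Hr2) as [r' [Hr' Hlt]].
    { exists emp. split; auto. apply decreasing_app_intro. apply dec_map; auto.
      intros X HX. apply in_map_iff in HX. destruct HX as [y [<- _]]. split.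
      - intros a [].
      - intros Hc. destruct (Hc y eq_refl) as [b [[] _]]. }
    eapply ole_olt_trans; [|exact Hlt]. constructor.
Qed.

Lemma main_inner : exists hA hP : Ord,
    height le hA /\ height (hoare le) hP /\
    exists m : nat,
      ole (oadd one hA) hP /\
      (is_limit_ord hA -> ole hP (oexp2 hA)) /\
      (is_succ_ord hA -> ole hP (omul (oexp2 hA) (onat m))).
Proof.
  destruct (rank_exists _ [] (dec_acc le lt_acc)) as [hA HA].
  destruct (rank_exists _ [] (dec_acc hle hlt_acc)) as [hP HP].
  exists hA, hP. split; [exact HA|]. split; [exact HP|].
  destruct (C_all hA) as [m Hm]. exists m.
  assert (Hbelow : forall S, below hA S).
  { intros S a _.
    destruct (rank_child_lt _ _ _ [a] HA) as [r' [Hr' Hlt]].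
    { exists a. split; auto. simpl. split; auto. intros y []. }
    eapply ole_olt_trans; [|exact Hlt].
    apply (rk_le_dec le le_trans a (rk a) (rk_spec a) [] r'); auto.
    simpl. split; auto. intros y []. }
  assert (Hup : forall X, (forall S, olt (H S) X) -> ole hP X).
  { intros X HX. destruct (has_rank_inv _ _ _ HP) as [f [E Hf]]. rewrite E.
    constructor. intros [t Ht]. constructor.
    pose proof (Hf (exist _ t Ht)) as Hft. simpl in Hft.
    destruct Ht as [S0 [Et Hd]].
    pose proof (dec_rank_le hle H emp (fun x y => H_lt x y) t _ Hft) as Hb.
    eapply ole_olt_trans; [apply Hb; exists [], S0; exact Et|].
    subst t. simpl. apply HX. }
  split; [|split].
  - apply (lower_bound [] hA HA I hP HP).
  - intros Hl. apply Hup. intros S. apply L_lemma; [apply Hl| intros d _; apply C_all| apply Hbelow].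
  - intros _. apply Hup. intros S. apply Hm. apply Hbelow.
Qed.

End Main.

Theorem mainTheorem2 (A : Type) (le : A -> A -> Prop)
  (le_refl : forall x, le x x)
  (le_trans : forall x y z, le x y -> le y z -> le x z)
  (Hwqo : wqo le) :
  exists hA hP : Ord,
    height le hA /\ height (hoare le) hP /\
    exists m : nat,
      ole (oadd one hA) hP /\
      (is_limit_ord hA -> ole hP (oexp2 hA)) /\
      (is_succ_ord hA -> ole hP (omul (oexp2 hA) (onat m))).
Proof.
  eapply main_inner; eauto.
Qed.
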